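(* Let $T$ be an $\mathcal O$-operator on the Lie $\infty$-algebra $(E,M_E)$ with respect to an action $\Phi$ of $E$ on the Lie $\infty$-algebra $(V,M_V)$. Then $M_{V^T}:=\Phi^T+M_V$ is a Lie $\infty$-algebra structure on $V$ (a degree $+1$ coderivation of $\bar S(V)$ with $M_{V^T}^2=0$), and $T:(V,M_{V^T})\to(E,M_E)$ is a Lie $\infty$-morphism.
   Context: Graded vector spaces are $\mathbb Z$-graded, finite dimensional over $\mathbb R$ or $\mathbb C$, with Koszul signs. $\bar S(W)$ is the reduced graded symmetric coalgebra with unshuffle coproduct $\Delta$, Sweedler notation $\Delta(w)=w_{(1)}\otimes w_{(2)}$. A comorphism is a degree $0$ coalgebra morphism; a coderivation of degree $k$ is a degree $k$ map $Q$ with $\Delta Q=(Q\otimes\mathrm{id}+\mathrm{id}\otimes Q)\Delta$. A Lie $\infty$-algebra $(E,M_E)$ is a degree $+1$ coderivation of $\bar S(E)$ with $M_E^2=0$; a Lie $\infty$-morphism is a comorphism $F$ with $F\circ M_E=M_V\circ F$. $\mathrm{Coder}(\bar S(V))[1]$ is the symmetric DGLA with $\partial_{M_V}Q=-M_VQ+(-1)^{\deg Q}QM_V$, $[Q,P]=(-1)^{\deg Q}(QP-(-1)^{\deg Q\deg P}PQ)$. An action of $(E,M_E)$ on $(V,M_V)$ is a degree $+1$ linear map $\bar S(E)\to\mathrm{Coder}(\bar S(V))$, $x\mapsto\Phi_x$, with $\Phi_{M_E(x)}=\partial_{M_V}\Phi_x+\frac12[\Phi_{x_{(1)}},\Phi_{x_{(2)}}]$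 for all $x$ (last term $0$ for $x\in E$). For a degree $0$ map $T:\bar S(V)\to\bar S(E)$, $\Phi^T:\bar S(V)\to\bar S(V)$ is defined by $\Phi^T(v)=0$ for $v\in V$ and $\Phi^T(v)=\Phi_{T(v_{(1)})}v_{(2)}$ for $v\in S^{\ge2}(V)$. An $\mathcal O$-operator on $E$ with respect to $\Phi$ is a comorphism $T:\bar S(V)\to\bar S(E)$ with $M_E\circ T=T\circ(\Phi^T+M_V)$. *)

(* Defs.v *)
(* Concrete model of the reduced graded symmetric coalgebra
   \bar S(W) of a finite dimensional Z-graded vector space W, given by a
   homogeneous basis 'I_n with degree function d : 'I_n -> int. *)
From mathcomp Require Import all_boot all_order all_algebra.
Set Implicit Arguments. Unset Strict Implicit. Unset Printing Implicit Defensive.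
Import Order.TTheory GRing.Theory Num.Theory.
Local Open Scope ring_scope.

Section LieInfty.
Variable K : numFieldType.

Definition ksign (a b : int) : K := (-1) ^+ (absz a * absz b)%N.

(* A basis monomial of \bar S(W) is a nonempty sequence of basis vectors,
   sorted (nondecreasing), in which odd-degree basis vectors occur at most
   once; it stands for the (graded symmetric) product in that order. *)
Definition valid n (d : 'I_n -> int) (m : seq 'I_n) : bool :=
  [&& m != [::], sorted (fun i j : 'I_n => (i <= j)%N) m &
      all (fun i => odd (absz (d i)) ==> (count_mem i m <= 1)%N) m].

Definition mdeg n (d : 'I_n -> int) (m : seq 'I_n) : int := \sum_(i <- m) d i.

Definition fsum (X : Type) := seq (K * X).
Definition coef (X : eqType) (s : fsum X) (x : X) : K :=
  \sum_(a <- s | a.2 == x) a.1.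
Definition fscale (X : Type) (c : K) (s : fsum X) : fsum X :=
  [seq (c * a.1, a.2) | a <- s].
Definition tprod (X Y : Type) (s1 : fsum X) (s2 : fsum Y) : fsum (X * Y) :=
  [seq (a.1 * b.1, (a.2, b.2)) | a <- s1, b <- s2].

Definition eqS n (d : 'I_n -> int) (s1 s2 : fsum (seq 'I_n)) : Prop :=
  forall p, valid d p -> coef s1 p = coef s2 p.
Definition eqT n (d : 'I_n -> int) (s1 s2 : fsum (seq 'I_n * seq 'I_n)) : Prop :=
  forall p q, valid d p -> valid d q -> coef s1 (p, q) = coef s2 (p, q).

Definition lmap (n1 n2 : nat) := seq 'I_n1 -> fsum (seq 'I_n2).

Definition lapp n1 n2 (d1 : 'I_n1 -> int) (f : lmap n1 n2) (s : fsum (seq 'I_n1))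
  : fsum (seq 'I_n2) :=
  flatten [seq fscale a.1 (f a.2) | a <- s & valid d1 a.2].

Definition lcomp n1 n2 n3 (d2 : 'I_n2 -> int) (g : lmap n2 n3) (f : lmap n1 n2)
  : lmap n1 n3 := fun m => lapp d2 g (f m).
Definition ladd n1 n2 (f g : lmap n1 n2) : lmap n1 n2 := fun m => f m ++ g m.
Definition lscale n1 n2 (c : K) (f : lmap n1 n2) : lmap n1 n2 :=
  fun m => fscale c (f m).
Definition lzero n1 n2 : lmap n1 n2 := fun _ => [::].
Definition lid n : lmap n n := fun m => [:: (1, m)].

Definition eqL n1 n2 (d1 : 'I_n1 -> int) (d2 : 'I_n2 -> int) (f g : lmap n1 n2) : Prop :=
  forall m, valid d1 m -> eqS d2 (f m) (g m).

Definition hdeg n1 n2 (d1 : 'I_n1 -> int) (d2 : 'I_n2 -> int) (f : lmap n1 n2)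
  (k : int) : Prop :=
  forall m p, valid d1 m -> valid d2 p -> coef (f m) p != 0 ->
    mdeg d2 p = mdeg d1 m + k.

Fixpoint masks (k : nat) : seq (seq bool) :=
  if k is k'.+1 then [seq b :: s | b <- [:: true; false], s <- masks k']
  else [:: [::]].

(* number of pairs (position i in J) < (position j in I) of odd elements:
   the Koszul sign of the unshuffle moving the I-part in front *)
Fixpoint kpairs (t : seq (bool * int)) : nat :=
  match t with
  | [::] => 0
  | (bi, di) :: t' =>
      ((if ~~ bi && odd (absz di)
        then count (fun x => x.1 && odd (absz x.2)) t' else 0)
       + kpairs t')%N
  end.

Definition cop n (d : 'I_n -> int) (m : seq 'I_n) : fsum (seq 'I_n * seq 'I_n) :=
  [seq ((-1) ^+ kpairs (zip b (map d m)), (mask b m, mask (map negb b) m))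
  | b <- [seq b <- masks (size m) |
           (mask b m != [::]) && (mask (map negb b) m != [::])]].

Definition copS n (d : 'I_n -> int) (s : fsum (seq 'I_n)) : fsum (seq 'I_n * seq 'I_n) :=
  flatten [seq fscale a.1 (cop d a.2) | a <- s & valid d a.2].

(* (f (x) g)(x (x) y) = (-1)^{|g||x|} f(x) (x) g(y), g of degree kg *)
Definition tens n1 n2 (d1 : 'I_n1 -> int) (f g : lmap n1 n2) (kg : int)
  (s : fsum (seq 'I_n1 * seq 'I_n1)) : fsum (seq 'I_n2 * seq 'I_n2) :=
  flatten [seq fscale (a.1 * ksign kg (mdeg d1 a.2.1)) (tprod (f a.2.1) (g a.2.2))
          | a <- s & valid d1 a.2.1 && valid d1 a.2.2].

Definition is_coder n (d : 'I_n -> int) (Q : lmap n n) (k : int) : Prop :=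
  hdeg d d Q k /\
  forall m, valid d m ->
    eqT d (copS d (Q m)) (tens d Q (@lid n) 0 (cop d m) ++ tens d (@lid n) Q k (cop d m)).

Definition is_comorphism n1 n2 (d1 : 'I_n1 -> int) (d2 : 'I_n2 -> int)
  (F : lmap n1 n2) : Prop :=
  hdeg d1 d2 F 0 /\
  forall m, valid d1 m -> eqT d2 (copS d2 (F m)) (tens d1 F F 0 (cop d1 m)).

Definition lie_inf n (d : 'I_n -> int) (M : lmap n n) : Prop :=
  is_coder d M 1 /\ eqL d d (lcomp d M M) (@lzero n n).

Definition lie_inf_morph n1 n2 (d1 : 'I_n1 -> int) (d2 : 'I_n2 -> int)
  (M1 : lmap n1 n1) (M2 : lmap n2 n2) (F : lmap n1 n2) : Prop :=
  is_comorphism d1 d2 F /\ eqL d1 d2 (lcomp d1 F M1) (lcomp d2 M2 F).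

(* ---------- the symmetric DGLA Coder(\bar S(V))[1] ----------
   degrees kQ, kP are the degrees of the coderivations Q, P *)
Definition dgla_d n (d : 'I_n -> int) (M Q : lmap n n) (kQ : int) : lmap n n :=
  ladd (lscale (-1) (lcomp d M Q)) (lscale ((-1) ^+ absz kQ) (lcomp d Q M)).

Definition dgla_br n (d : 'I_n -> int) (Q P : lmap n n) (kQ kP : int) : lmap n n :=
  lscale ((-1) ^+ absz kQ)
    (ladd (lcomp d Q P) (lscale (- ksign kQ kP) (lcomp d P Q))).

(* ---------- actions ----------
   Phi : \bar S(E) -> Coder(\bar S(V)) given on basis monomials of \bar S(E) *)
Definition Phis nE nV (dE : 'I_nE -> int) (Phi : seq 'I_nE -> lmap nV nV)
  (s : fsum (seq 'I_nE)) : lmap nV nV :=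
  fun v => flatten [seq fscale a.1 (Phi a.2 v) | a <- s & valid dE a.2].

Definition is_action nE nV (dE : 'I_nE -> int) (dV : 'I_nV -> int)
  (ME : lmap nE nE) (MV : lmap nV nV) (Phi : seq 'I_nE -> lmap nV nV) : Prop :=
  (forall x, valid dE x -> is_coder dV (Phi x) (mdeg dE x + 1)) /\
  (forall x, valid dE x ->
     eqL dV dV (Phis dE Phi (ME x))
       (ladd (dgla_d dV MV (Phi x) (mdeg dE x + 1))
             (fun v => flatten
                [seq fscale (a.1 / 2)
                   (dgla_br dV (Phi a.2.1) (Phi a.2.2)
                      (mdeg dE a.2.1 + 1) (mdeg dE a.2.2 + 1) v)
                | a <- cop dE x]))).

Definition PhiT nE nV (dE : 'I_nE -> int) (dV : 'I_nV -> int)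
  (Phi : seq 'I_nE -> lmap nV nV) (T : lmap nV nE) : lmap nV nV :=
  fun v => if (size v <= 1)%N then [::]
           else flatten [seq fscale a.1 (Phis dE Phi (T a.2.1) a.2.2) | a <- cop dV v].

Definition O_operator nE nV (dE : 'I_nE -> int) (dV : 'I_nV -> int)
  (ME : lmap nE nE) (MV : lmap nV nV) (Phi : seq 'I_nE -> lmap nV nV)
  (T : lmap nV nE) : Prop :=
  is_comorphism dV dE T /\
  eqL dV dE (lcomp dE ME T) (lcomp dV T (ladd (PhiT dE dV Phi T) MV)).

End LieInfty.

(* Main.v *)
Require Import Defs.
From mathcomp Require Import all_boot all_order all_algebra zify ring.
Set Implicit Arguments. Unset Strict Implicit. Unset Printing Implicit Defensive.
Import Order.TTheory GRing.Theory Num.Theory.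
Local Open Scope ring_scope.

Section Fw.
Variable K : numFieldType.

Definition fw (X : Type) (P : pred X) (s : fsum K X) (g : X -> K) : K :=
  \sum_(a <- s | P a.2) a.1 * g a.2.

Lemma fw_cat X P (s1 s2 : fsum K X) g : fw P (s1 ++ s2) g = fw P s1 g + fw P s2 g.
Proof. by rewrite /fw big_cat. Qed.

Lemma fw_nil X P (g : X -> K) : fw P [::] g = 0.
Proof. by rewrite /fw big_nil. Qed.

Lemma fw_fscale X P c (s : fsum K X) g : fw P (fscale c s) g = c * fw P s g.
Proof. by rewrite /fw /fscale big_map mulr_sumr; apply: eq_bigr => a _ /=; rewrite mulrA. Qed.

Lemma fw_bind X Y (P : pred X) (Q : pred Y) (f : X -> fsum K Y) s g :
  fw Q (flatten [seq fscale a.1 (f a.2) | a <- s & P a.2]) g =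
  fw P s (fun x => fw Q (f x) g).
Proof.
rewrite /fw big_flatten /= big_map big_filter; apply: eq_bigr => a _.
by rewrite -/(fw Q _ g) fw_fscale.
Qed.

Lemma coefE (X : eqType) (s : fsum K X) y : coef s y = fw (pred1 y) s (fun _ => 1).
Proof. by rewrite /coef /fw; apply: eq_bigr => a _; rewrite mulr1. Qed.

Lemma coef_bind X (Y : eqType) (P : pred X) (f : X -> fsum K Y) s y :
  coef (flatten [seq fscale a.1 (f a.2) | a <- s & P a.2]) y =
  fw P s (fun x => coef (f x) y).
Proof. by rewrite coefE fw_bind; apply: eq_bigr => a _; rewrite coefE. Qed.

Lemma coef_cat (X : eqType) (s1 s2 : fsum K X) y : coef (s1 ++ s2) y = coef s1 y + coef s2 y.
Proof. by rewrite !coefE fw_cat. Qed.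

Lemma coef_fscale (X : eqType) c (s : fsum K X) y : coef (fscale c s) y = c * coef s y.
Proof. by rewrite !coefE fw_fscale. Qed.

Lemma coef_cons (X : eqType) (a : K * X) s x :
  coef (a :: s) x = (a.2 == x)%:R * a.1 + coef s x.
Proof. by rewrite /coef big_cons; case: eqP; rewrite ?mul1r ?mul0r ?add0r. Qed.

Lemma fw_regroup (X : eqType) (P : pred X) (s : fsum K X) g (U : seq X) :
  uniq U -> {subset map snd s <= U} ->
  fw P s g = \sum_(x <- U | P x) coef s x * g x.
Proof.
move=> uU; elim: s => [|a s IH] sU.
  by rewrite fw_nil big1 // => x _; rewrite /coef big_nil mul0r.
have aU : a.2 \in U by apply: sU; rewrite inE eqxx.
rewrite /fw big_cons -/(fw P s g) IH; last by move=> x xs; apply: sU; rewrite inE xs orbT.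
under [RHS]eq_bigr do rewrite coef_cons mulrDl.
rewrite big_split /= [X in _ = X + _]big_mkcond (bigD1_seq a.2) //=.
rewrite [X in _ = _ + X + _]big1 ?addr0.
  by case: (P a.2); rewrite ?eqxx ?mul1r ?add0r.
by move=> x /negPf xa; rewrite eq_sym xa; case: (P x); rewrite ?mul0r.
Qed.

Lemma fw_eq (X : eqType) (P : pred X) (s s' : fsum K X) g :
  (forall x, P x -> coef s x = coef s' x) -> fw P s g = fw P s' g.
Proof.
move=> h.
rewrite (@fw_regroup _ P s g (undup (map snd (s ++ s')))) ?undup_uniq //; last first.
  by move=> x xs; rewrite mem_undup map_cat mem_cat xs.
rewrite (@fw_regroup _ P s' g (undup (map snd (s ++ s')))) ?undup_uniq //; last first.
  by move=> x xs; rewrite mem_undup map_cat mem_cat xs orbT.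
by apply: eq_bigr => x Px; rewrite h.
Qed.

Lemma fw_supp (X : eqType) (P : pred X) (s : fsum K X) g g' :
  (forall x, P x -> coef s x != 0 -> g x = g' x) -> fw P s g = fw P s g'.
Proof.
move=> h.
rewrite !(@fw_regroup _ P s _ (undup (map snd s))) ?undup_uniq //; try by move=> x; rewrite mem_undup.
apply: eq_bigr => x Px; have [->|nz] := eqVneq (coef s x) 0; first by rewrite !mul0r.
by rewrite h.
Qed.

Lemma fw_add X P (s : fsum K X) g g' : fw P s (fun x => g x + g' x) = fw P s g + fw P s g'.
Proof. by rewrite /fw -big_split; apply: eq_bigr => a _; rewrite mulrDr. Qed.

Lemma fw_opp X P (s : fsum K X) g : fw P s (fun x => - g x) = - fw P s g.
Proof. by rewrite /fw -sumrN; apply: eq_bigr => a _; rewrite mulrN. Qed.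

Lemma fw_scal X P (s : fsum K X) c g : fw P s (fun x => c * g x) = c * fw P s g.
Proof. by rewrite /fw mulr_sumr; apply: eq_bigr => a _; rewrite mulrCA. Qed.

Lemma fw_ext X P (s : fsum K X) g g' : (forall x, g x = g' x) -> fw P s g = fw P s g'.
Proof. by move=> h; rewrite /fw; apply: eq_bigr => a _; rewrite h. Qed.

Lemma fw_exch X Y P Q (s : fsum K X) (t : fsum K Y) (g : X -> Y -> K) :
  fw P s (fun x => fw Q t (g x)) = fw Q t (fun y => fw P s (fun x => g x y)).
Proof.
rewrite /fw; under eq_bigr do rewrite mulr_sumr.
rewrite exchange_big /=; apply: eq_bigr => b _; rewrite mulr_sumr.
by apply: eq_bigr => a _; rewrite mulrCA.
Qed.

Lemma fw_tprod X Y (P : pred X) (Q : pred Y) (s : fsum K X) (t : fsum K Y) g :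
  fw (fun pq => P pq.1 && Q pq.2) (tprod s t) g = fw P s (fun p => fw Q t (fun q => g (p, q))).
Proof.
rewrite /fw /tprod big_mkcond big_allpairs_dep /= [RHS]big_mkcond /=.
apply: eq_bigr => a _; case: (P a.2) => /=; last by rewrite big1.
rewrite mulr_sumr [RHS]big_mkcond; apply: eq_bigr => b _.
by case: (Q b.2); rewrite ?mulr0 // mulrA.
Qed.

Lemma coef_tprod (X Y : eqType) (s : fsum K X) (t : fsum K Y) p q :
  coef (tprod s t) (p, q) = coef s p * coef t q.
Proof.
rewrite !coefE.
rewrite (_ : fw _ _ _ = fw (fun pq : X * Y => pred1 p pq.1 && pred1 q pq.2) (tprod s t) (fun _ => 1)) //.
by rewrite fw_tprod mulrC -fw_scal; apply: fw_ext => x; rewrite mulr1.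
Qed.

End Fw.


Section Par.
Variable K : numFieldType.
Definition par (k : int) : bool := odd (absz k).

Lemma sgz_exprz (k : int) : (-1) ^+ absz k = (-1) ^ k :> K.
Proof. by case: k => n //=; rewrite /exprz /= invr_sign. Qed.

Lemma sg_par (k : int) : (-1) ^+ absz k = (-1) ^+ par k :> K.
Proof. by rewrite /par signr_odd. Qed.


Lemma par1 : par 1 = true. Proof. by []. Qed.
Lemma par0 : par 0 = false. Proof. by []. Qed.

End Par.
Lemma parD a b : par (a + b) = par a (+) par b.
Proof.
apply: (@signr_inj rat); rewrite signr_addb -!(@sg_par rat) !(@sgz_exprz rat) expfzDr //.
Qed.
Section Par2.
Variable K : numFieldType.
Lemma ksignE (a b : int) : ksign K a b = (-1) ^+ (par a && par b).
Proof. by rewrite /ksign /par -signr_odd oddM. Qed.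
End Par2.

Section Cop.
Variable K : numFieldType.
Variable n : nat.
Variable d : 'I_n -> int.
Local Notation T := 'I_n.
Definition o (i : T) := par (d i).
Definition sgb (b : bool) : K := (-1) ^+ b.

Fixpoint cop0 (m : seq T) : seq (K * (seq T * seq T)) :=
  match m with
  | [::] => [:: (1, ([::], [::]))]
  | x :: m' => [seq (a.1, (x :: a.2.1, a.2.2)) | a <- cop0 m'] ++
               [seq (a.1 * sgb (o x && odd (count o a.2.1)), (a.2.1, x :: a.2.2)) | a <- cop0 m']
  end.

Lemma size_masks k s : s \in masks k -> size s = k.
Proof.
elim: k s => [|k IH] s /=; first by rewrite inE => /eqP ->.
rewrite cats0 mem_cat => /orP[] /mapP[s' /IH <- ->] //.
Qed.

Lemma count_zip (s : seq bool) (m : seq T) : size s = size m ->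
  count (fun x : bool * int => x.1 && odd (absz x.2)) (zip s (map d m)) = count o (mask s m).
Proof.
elim: m s => [|x m IH] [|b s] //= [] /IH ->; by case: b.
Qed.

Lemma copfull m :
  [seq ((-1) ^+ kpairs (zip b (map d m)), (mask b m, mask (map negb b) m)) | b <- masks (size m)]
  = cop0 m.
Proof.
elim: m => [|x m IH] //=.
rewrite cats0 map_cat -!map_comp -IH -!map_comp; congr (_ ++ _); apply/eq_in_map => s sm /=.
rewrite (count_zip (size_masks sm)) /sgb /o /par exprD mulrC.
by case: (odd `|d x|) => //=; rewrite signr_odd.
Qed.

Lemma copE m : cop K d m = [seq a <- cop0 m | (a.2.1 != [::]) && (a.2.2 != [::])].
Proof. by rewrite /cop -copfull filter_map map_comp. Qed.

Definition csum m (F : seq T -> seq T -> K) : K := \sum_(a <- cop0 m) a.1 * F a.2.1 a.2.2.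
Definition sg2 (p q : seq T) : K := sgb (odd (count o p) && odd (count o q)).

Lemma csum_cons x m F : csum (x :: m) F =
  csum m (fun p q => F (x :: p) q) + csum m (fun p q => sgb (o x && odd (count o p)) * F p (x :: q)).
Proof.
rewrite /csum /= big_cat !big_map /=; congr (_ + _).
by apply: eq_bigr => a _; rewrite mulrA.
Qed.

Lemma csum_nil F : csum [::] F = F [::] [::].
Proof. by rewrite /csum big_seq1 mul1r. Qed.

Lemma cop0_count m a : a \in cop0 m -> forall P, (count P a.2.1 + count P a.2.2 = count P m)%N.
Proof.
elim: m a => [|x m IH] a /=; first by rewrite inE => /eqP -> P.
rewrite mem_cat => /orP[] /mapP[b /IH bm ->] P /=; rewrite -(bm P); case: (P x) => /=; lia.
Qed.

Lemma cop0_perm m a : a \in cop0 m -> perm_eq m (a.2.1 ++ a.2.2).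
Proof.
move=> am; apply/allP => x _; apply/eqP; rewrite count_cat; exact/esym/cop0_count.
Qed.

Lemma csum_ext_in m F G : (forall a, a \in cop0 m -> F a.2.1 a.2.2 = G a.2.1 a.2.2) -> csum m F = csum m G.
Proof. by move=> h; rewrite /csum big_seq_cond [RHS]big_seq_cond; apply: eq_bigr => a /andP[/h ->]. Qed.

Lemma csum_ext m F G : (forall p q, F p q = G p q) -> csum m F = csum m G.
Proof. by move=> h; apply: csum_ext_in => a _; apply: h. Qed.

Lemma csum0 m : csum m (fun _ _ => 0) = 0.
Proof. by rewrite /csum big1 // => a _; rewrite mulr0. Qed.

Lemma csumD m F G : csum m (fun p q => F p q + G p q) = csum m F + csum m G.
Proof. by rewrite /csum -big_split; apply: eq_bigr => a _; rewrite mulrDr. Qed.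

Lemma csumZ m c F : csum m (fun p q => c * F p q) = c * csum m F.
Proof. by rewrite /csum mulr_sumr; apply: eq_bigr => a _; rewrite mulrCA. Qed.

Lemma sgbM b1 b2 : sgb b1 * sgb b2 = sgb (b1 (+) b2).
Proof. by rewrite /sgb signr_addb. Qed.

Lemma sgb_sq b : sgb b * sgb b = 1.
Proof. by rewrite sgbM addbb. Qed.

Lemma count_cons_odd x p : odd (count o (x :: p)) = o x (+) odd (count o p).
Proof. by rewrite /= oddD oddb. Qed.

Lemma cocomm m F : csum m F = csum m (fun p q => sg2 p q * F q p).
Proof.
elim: m F => [|x m IH] F; first by rewrite !csum_nil /sg2 /sgb /= expr0 mul1r.
rewrite !csum_cons (IH (fun p q => F (x :: p) q)).
rewrite (IH (fun p q => sgb (o x && odd (count o p)) * F p (x :: q))) addrC.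
congr (_ + _); apply: csum_ext => p q; rewrite /sg2 !count_cons_odd !mulrA sgbM.
  by case: (o x); case: (odd (count o p)); case: (odd (count o q)).
by case: (o x); case: (odd (count o p)); case: (odd (count o q)).
Qed.

Lemma coassoc m (F : seq T -> seq T -> seq T -> K) :
  csum m (fun p q => csum q (F p)) = csum m (fun p q => csum p (fun u w => F u w q)).
Proof.
elim: m F => [|x m IH] F; first by rewrite !csum_nil.
rewrite !csum_cons.
under [X in _ + X = _]csum_ext do rewrite csum_cons mulrDr -!csumZ.
rewrite csumD.
under [X in _ = X + _]csum_ext do rewrite csum_cons.
rewrite csumD (IH (fun u w z => F (x :: u) w z)).
rewrite (IH (fun u w z => sgb (o x && odd (count o u)) * F u (x :: w) z)).
rewrite (IH (fun u w z => sgb (o x && odd (count o u)) * (sgb (o x && odd (count o w)) * F u w (x :: z)))).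
rewrite addrA; congr (_ + _).
apply: csum_ext_in => a am; rewrite -csumZ; apply: csum_ext_in => b bm.
rewrite mulrA sgbM; congr (sgb _ * _).
by rewrite -(cop0_count bm o) oddD; case: (o x).
Qed.

Definition csumF m (F : seq T -> seq T -> K) : K := \sum_(a <- cop K d m) a.1 * F a.2.1 a.2.2.
Definition ne2 (p q : seq T) := (p != [::]) && (q != [::]).

Lemma csumFE m F : csumF m F = csum m (fun p q => if ne2 p q then F p q else 0).
Proof.
rewrite /csumF copE big_filter /csum big_mkcond; apply: eq_bigr => a _.
by rewrite /ne2; case: ifP; rewrite ?mulr0.
Qed.

Lemma csumF_ext m F G : (forall p q, F p q = G p q) -> csumF m F = csumF m G.
Proof. by move=> h; rewrite /csumF; apply: eq_bigr => a _; rewrite h. Qed.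

Lemma csumF_ext_in m F G : (forall a, a \in cop K d m -> F a.2.1 a.2.2 = G a.2.1 a.2.2) ->
  csumF m F = csumF m G.
Proof. by move=> h; rewrite /csumF big_seq_cond [RHS]big_seq_cond; apply: eq_bigr => a /andP[/h ->]. Qed.

Lemma csumFD m F G : csumF m (fun p q => F p q + G p q) = csumF m F + csumF m G.
Proof. by rewrite /csumF -big_split; apply: eq_bigr => a _; rewrite mulrDr. Qed.

Lemma csumFZ m c F : csumF m (fun p q => c * F p q) = c * csumF m F.
Proof. by rewrite /csumF mulr_sumr; apply: eq_bigr => a _; rewrite mulrCA. Qed.

Lemma csumFN m F : csumF m (fun p q => - F p q) = - csumF m F.
Proof. by rewrite /csumF -sumrN; apply: eq_bigr => a _; rewrite mulrN. Qed.

Lemma csumF0 m : csumF m (fun _ _ => 0) = 0.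
Proof. by rewrite /csumF big1 // => a _; rewrite mulr0. Qed.

Lemma cocommF m F : csumF m F = csumF m (fun p q => sg2 p q * F q p).
Proof.
rewrite !csumFE cocomm; apply: csum_ext => p q.
by rewrite /ne2 andbC; case: ifP; rewrite ?mulr0.
Qed.

Lemma coassocF m (F : seq T -> seq T -> seq T -> K) :
  csumF m (fun p q => csumF q (F p)) = csumF m (fun p q => csumF p (fun u w => F u w q)).
Proof.
rewrite !csumFE.
pose G u w z := if (u != [::]) && (w != [::]) && (z != [::]) then F u w z else 0.
transitivity (csum m (fun p q => csum q (G p))).
  apply: csum_ext => p q; rewrite csumFE /G /ne2.
  have [->|qn] := eqVneq q [::].
    by rewrite !csum_nil !andbF.
  rewrite /= andbT; case: (p != [::]) => /=; first by [].
  by rewrite csum0.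
rewrite coassoc; apply: csum_ext => p q; rewrite csumFE /G /ne2.
have [->|pn] := eqVneq p [::].
  by rewrite !csum_nil /=.
rewrite /=; case: (q != [::]) => /=; last first.
  by rewrite (@csum_ext _ _ (fun _ _ => 0)) ?csum0 // => u w; rewrite andbF.
by apply: csum_ext => u w; rewrite andbT.
Qed.

Lemma par_mdeg p : par (mdeg d p) = odd (count o p).
Proof.
elim: p => [|x p IH]; first by rewrite /mdeg big_nil.
by move: IH; rewrite /mdeg big_cons parD => ->; rewrite count_cons_odd.
Qed.

Lemma sg2E p q : sg2 p q = ksign K (mdeg d p) (mdeg d q).
Proof. by rewrite ksignE !par_mdeg. Qed.

Lemma cop0_subseq m a : a \in cop0 m -> subseq a.2.1 m && subseq a.2.2 m.
Proof.
elim: m a => [|x m IH] a; first by rewrite inE => /eqP ->.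
rewrite [cop0 _]/=.
have sc (s : seq T) : subseq s m -> subseq s (x :: m).
  by move=> h; apply: subseq_trans h (subseq_cons _ _).
have scc (s : seq T) : subseq s m -> subseq (x :: s) (x :: m).
  by move=> h; rewrite /= eqxx.
rewrite mem_cat => /orP[] /mapP[b /IH /andP[b1 b2] ->]; apply/andP; split.
- exact: scc.
- exact: sc.
- exact: sc.
- exact: scc.
Qed.

Lemma valid_sub m p : valid d m -> p != [::] -> subseq p m ->
  (forall P, count P p <= count P m)%N -> valid d p.
Proof.
case/and3P=> _ sm am pn sp cp; apply/and3P; split => //.
  apply: (subseq_sorted _ sp sm) => i j k; exact: leq_trans.
apply/allP => i ip; have im := mem_subseq sp ip.
move/allP: am => /(_ _ im) /implyP h; apply/implyP => /h; exact: leq_trans.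
Qed.

Lemma cop_valid m a : valid d m -> a \in cop K d m -> valid d a.2.1 && valid d a.2.2.
Proof.
move=> vm; rewrite copE mem_filter => /andP[/andP[n1 n2] am].
case/andP: (cop0_subseq am) => s1 s2.
have c := cop0_count am.
apply/andP; split; apply: (valid_sub vm) => // P; rewrite -(c P).
  exact: leq_addr.
exact: leq_addl.
Qed.

Lemma cop_mdeg m a : a \in cop K d m -> (mdeg d a.2.1 + mdeg d a.2.2 = mdeg d m)%R.
Proof.
rewrite copE mem_filter => /andP[_ am].
by rewrite /mdeg -big_cat; apply/esym/perm_big/cop0_perm.
Qed.

Lemma cop_small m : (size m <= 1)%N -> cop K d m = [::].
Proof.
move=> sm; rewrite copE; apply/eqP; rewrite -[_ == _]negbK -has_filter; apply/hasP => -[a am /andP[n1 n2]].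
have := cop0_count am predT; rewrite !count_predT => h.
move: sm; rewrite -h; case: a.2.1 n1 => // ? ? _; case: a.2.2 n2 => // ? ? _.
by rewrite /= addnS addSn.
Qed.
End Cop.


Section Gen.
Variable K : numFieldType.

Lemma fw_bind0 X Y (Q : pred Y) (f : X -> fsum K Y) (s : fsum K X) g :
  fw Q (flatten [seq fscale a.1 (f a.2) | a <- s]) g = \sum_(a <- s) a.1 * fw Q (f a.2) g.
Proof. by rewrite /fw big_flatten /= big_map; apply: eq_bigr => a _; rewrite -/(fw Q _ g) fw_fscale. Qed.

Lemma fw_bindc X Y (P : pred X) (Q : pred Y) (c : X -> K) (f : X -> fsum K Y) s g :
  fw Q (flatten [seq fscale (a.1 * c a.2) (f a.2) | a <- s & P a.2]) g =
  fw P s (fun x => c x * fw Q (f x) g).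
Proof.
rewrite /fw big_flatten /= big_map big_filter; apply: eq_bigr => a _.
by rewrite -/(fw Q _ g) fw_fscale mulrA.
Qed.

Lemma sum_nz (I : Type) (r : seq I) (F : I -> K) :
  \sum_(i <- r) F i != 0 -> exists2 i, List.In i r & F i != 0.
Proof.
elim: r => [|i r IH]; first by rewrite big_nil eqxx.
rewrite big_cons; have [h|h] := eqVneq (F i) 0.
  by rewrite h add0r => /IH [j jr Fj]; exists j => //; right.
by move=> _; exists i => //; left.
Qed.

Lemma sum_nz_eq (I : eqType) (r : seq I) (F : I -> K) :
  \sum_(i <- r) F i != 0 -> exists2 i, i \in r & F i != 0.
Proof.
elim: r => [|i r IH]; first by rewrite big_nil eqxx.
rewrite big_cons; have [h|h] := eqVneq (F i) 0.
  by rewrite h add0r => /IH [j jr Fj]; exists j => //; rewrite inE jr orbT.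
by move=> _; exists i => //; rewrite inE eqxx.
Qed.

Lemma fw_nz (X : eqType) (P : pred X) (s : fsum K X) g :
  fw P s g != 0 -> exists x, [/\ P x, coef s x != 0 & g x != 0].
Proof.
rewrite (fw_regroup P g (U := undup (map snd s))) ?undup_uniq //; last by move=> x; rewrite mem_undup.
rewrite -big_filter => /sum_nz_eq [x]; rewrite mem_filter => /andP[Px _].
have [->|nz] := eqVneq (coef s x) 0; first by rewrite mul0r eqxx.
have [->|gz] := eqVneq (g x) 0; first by rewrite mulr0 eqxx.
by move=> _; exists x.
Qed.
End Gen.

Section Gen2.
Variable K : numFieldType.
Variable n : nat.
Variable d : 'I_n -> int.
Local Notation T := 'I_n.
Definition vv (pq : seq T * seq T) := valid d pq.1 && valid d pq.2.

Lemma coef_lid (x p : seq T) : coef (lid K x) p = (x == p)%:R.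
Proof. by rewrite /coef /lid big_cons big_nil /=; case: eqP; rewrite ?addr0. Qed.

Lemma fw_lid (P : pred (seq T)) (x : seq T) g : P x -> fw P (lid K x) g = g x.
Proof. by move=> Px; rewrite /fw /lid big_cons big_nil Px /= mul1r addr0. Qed.

Lemma fw_cop (m : seq T) (G : seq T * seq T -> K) : valid d m ->
  fw vv (cop K d m) G = csumF d m (fun u w => G (u, w)).
Proof.
move=> vm; rewrite /fw /csumF big_seq_cond [RHS]big_seq_cond; apply: eq_big => // a.
case am: (a \in cop K d m); rewrite ?andbF ?andbT //=.
  by rewrite /vv (cop_valid vm am).
by case: a => ? [].

Qed.

Lemma fw_csumF X (P : pred X) (s : fsum K X) m (F : X -> seq T -> seq T -> K) :
  fw P s (fun x => csumF d m (F x)) = csumF d m (fun u w => fw P s (fun x => F x u w)).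
Proof.
rewrite /fw /csumF; under eq_bigr do rewrite mulr_sumr.
rewrite exchange_big /=; apply: eq_bigr => b _; rewrite mulr_sumr.
by apply: eq_bigr => a _; rewrite mulrCA.
Qed.

Lemma coef_tens_cop n2 (f g : lmap K n n2) k (m : seq T) p q : valid d m ->
  coef (tens d f g k (cop K d m)) (p, q) =
  csumF d m (fun u w => ksign K k (mdeg d u) * (coef (f u) p * coef (g w) q)).
Proof.
move=> vm; rewrite coefE /tens.
rewrite (fw_bindc vv _ (fun pq : seq T * seq T => ksign K k (mdeg d pq.1))
           (fun pq : seq T * seq T => tprod (f pq.1) (g pq.2))).
rewrite fw_cop //; apply: csumF_ext => u w; congr (_ * _).
by rewrite -coefE coef_tprod.
Qed.

Lemma fw_tens n2 (f g : lmap K n n2) k s Q h :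
  fw Q (tens d f g k s) h = fw vv s (fun pq => ksign K k (mdeg d pq.1) * fw Q (tprod (f pq.1) (g pq.2)) h).
Proof. exact: (fw_bindc vv _ (fun pq : seq T * seq T => ksign K k (mdeg d pq.1))
           (fun pq : seq T * seq T => tprod (f pq.1) (g pq.2))). Qed.

Lemma coef_lapp n2 (f : lmap K n n2) s y : coef (lapp d f s) y = fw (valid d) s (fun x => coef (f x) y).
Proof. exact: coef_bind. Qed.

Lemma coef_copS s pq : coef (copS d s) pq = fw (valid d) s (fun x => coef (cop K d x) pq).
Proof. exact: coef_bind. Qed.

Lemma coef_ladd n2 (f g : lmap K n n2) x y : coef (ladd f g x) y = coef (f x) y + coef (g x) y.
Proof. by rewrite /ladd coef_cat. Qed.

Lemma coef_lscale n2 c (f : lmap K n n2) x y : coef (lscale c f x) y = c * coef (f x) y.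
Proof. by rewrite /lscale coef_fscale. Qed.

Lemma coef_lcomp n2 n3 (d2 : 'I_n2 -> int) (g : lmap K n2 n3) (f : lmap K n n2) x y :
  coef (lcomp d2 g f x) y = fw (valid d2) (f x) (fun z => coef (g z) y).
Proof. exact: coef_bind. Qed.
End Gen2.


Section Main.
Variables (K : numFieldType) (nE nV : nat) (dE : 'I_nE -> int) (dV : 'I_nV -> int)
  (ME : lmap K nE nE) (MV : lmap K nV nV) (Phi : seq 'I_nE -> lmap K nV nV) (T : lmap K nV nE).
Hypotheses (hMV : lie_inf dV MV) (hact : is_action dE dV ME MV Phi)
  (hO : O_operator dE dV ME MV Phi T).

Local Notation vV := (valid dV).
Local Notation vE := (valid dE).
Local Notation SV := (seq 'I_nV).
Local Notation SE := (seq 'I_nE).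
Definition Psi (u z : SV) := Phis dE Phi (T u) z.
Local Notation PT := (PhiT dE dV Phi T).
Local Notation D := (ladd PT MV).
Local Notation CF := (csumF dV).
Local Notation LID := (@lid K nV).

Lemma fw_Phis Q s z g : fw Q (Phis dE Phi s z) g = fw vE s (fun x => fw Q (Phi x z) g).
Proof. exact: fw_bind. Qed.

Lemma coef_Phis s z y : coef (Phis dE Phi s z) y = fw vE s (fun x => coef (Phi x z) y).
Proof. exact: coef_bind. Qed.

Lemma PT_E v : PT v = flatten [seq fscale a.1 (Psi a.2.1 a.2.2) | a <- cop K dV v].
Proof. by rewrite /PhiT; case: ifP => // /cop_small ->. Qed.

Lemma fw_PT Q v g : fw Q (PT v) g = CF v (fun u z => fw Q (Psi u z) g).
Proof. by rewrite PT_E (fw_bind0 Q (fun pq : SV * SV => Psi pq.1 pq.2)). Qed.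

Lemma coef_PT v y : coef (PT v) y = CF v (fun u z => coef (Psi u z) y).
Proof. by rewrite coefE fw_PT; apply: csumF_ext => u z; rewrite -coefE. Qed.

Lemma hdegT : hdeg dV dE T 0. Proof. by case: hO => -[]. Qed.
Lemma hdegPhi x : vE x -> hdeg dV dV (Phi x) (mdeg dE x + 1).
Proof. by case: hact => h _ /h []. Qed.
Lemma hdegMV : hdeg dV dV MV 1. Proof. by case: hMV => -[]. Qed.

Lemma D_hdeg : hdeg dV dV D 1.
Proof.
move=> m p vm vp; rewrite coef_ladd.
have [h0|hnz] := eqVneq (coef (MV m) p) 0; last by move=> _; exact: hdegMV.
rewrite h0 addr0 coef_PT /csumF => /sum_nz_eq [a am].
rewrite mulf_eq0 negb_or => /andP[_].
rewrite coef_Phis => /fw_nz [x [vx cx cp]].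
case/andP: (cop_valid vm am) => v1 v2.
have e1 := hdegT v1 vx cx; have e2 := hdegPhi vx v2 vp cp.
rewrite e2 e1 -(cop_mdeg am); lia.
Qed.

Lemma fw_extP X (P : pred X) (s : fsum K X) g g' : (forall x, P x -> g x = g' x) -> fw P s g = fw P s g'.
Proof. by move=> h; apply: eq_bigr => a /h ->. Qed.

Lemma fw_comb X (P : pred X) (s : fsum K X) c1 c2 c3 g h1 h2 :
  (forall x, g x = c1 * (c2 * (h1 x - c3 * h2 x))) ->
  fw P s g = c1 * (c2 * (fw P s h1 - c3 * fw P s h2)).
Proof.
move=> h; rewrite (fw_ext _ _ h) fw_scal fw_scal; congr (_ * (_ * _)).
by rewrite (fw_add P s h1 (fun x => - (c3 * h2 x))) fw_opp fw_scal.
Qed.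

Lemma coderPhi x : vE x -> is_coder dV (Phi x) (mdeg dE x + 1).
Proof. by case: hact => h _ /h. Qed.

Lemma ksign0 k : ksign K 0 k = 1.
Proof. by rewrite ksignE. Qed.

Lemma sg_swap1 (a b : int) : ksign K a b * ksign K (b + 1) a = ksign K 1 a.
Proof.
rewrite !ksignE -signr_addb parD /par /=.
by case: (odd `|a|); case: (odd `|b|).
Qed.

Lemma coef_Psi u z y : coef (Psi u z) y = fw vE (T u) (fun x => coef (Phi x z) y).
Proof. exact: coef_Phis. Qed.

Lemma fw_Tdeg u (g g' : SE -> K) : vV u ->
  (forall x, vE x -> mdeg dE x = mdeg dV u -> g x = g' x) -> fw vE (T u) g = fw vE (T u) g'.
Proof.
move=> vu h; apply: fw_supp => x vx cx; apply: h => //.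
by rewrite (hdegT vu vx cx) addr0.
Qed.

Lemma PT_coder m p q : vV m -> vV p -> vV q ->
  fw vV (PT m) (fun w => coef (cop K dV w) (p, q)) =
  coef (tens dV PT LID 0 (cop K dV m)) (p, q) + coef (tens dV LID PT 1 (cop K dV m)) (p, q).
Proof.
move=> vm vp vq; rewrite fw_PT !coef_tens_cop //.
transitivity (CF m (fun u z => CF z (fun a b => fw vE (T u) (fun x =>
      coef (Phi x a) p * coef (LID b) q))) +
    CF m (fun u z => CF z (fun a b => ksign K (mdeg dV u + 1) (mdeg dV a) *
      (coef (LID a) p * coef (Psi u b) q)))).
  rewrite -csumFD; apply: csumF_ext_in => a am; case/andP: (cop_valid vm am) => v1 v2.
  rewrite fw_Phis -!fw_csumF.
  rewrite [X in _ = _ + X](_ : _ = fw vE (T a.2.1) (fun x => CF a.2.2 (fun a0 b =>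
      ksign K (mdeg dE x + 1) (mdeg dV a0) * (coef (LID a0) p * coef (Phi x b) q)))); last first.
    rewrite fw_csumF; apply: csumF_ext => a0 b; rewrite coef_Psi -fw_scal.
    rewrite -fw_scal; apply: fw_Tdeg => // x vx ->.
    by [].
  rewrite -fw_add; apply: fw_extP => x vx.
  rewrite -coef_copS ((coderPhi vx).2 _ v2 _ _ vp vq) coef_cat !coef_tens_cop //.
  by congr (_ + _); apply: csumF_ext => a0 b; rewrite ksign0 mul1r.
congr (_ + _).
  rewrite coassocF; apply: csumF_ext => u z; rewrite ksign0 mul1r coef_PT mulrC -csumFZ.
  apply: csumF_ext => a b; rewrite coef_Psi -fw_scal; apply: fw_ext => x; exact: mulrC.
transitivity (CF m (fun u z => CF z (fun a b => ksign K 1 (mdeg dV u) * coef (LID u) p * coef (Psi a b) q))); last first.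
  apply: csumF_ext => u z; rewrite coef_PT mulrA -csumFZ; apply: csumF_ext => a b.
  by [].
rewrite !coassocF; apply: csumF_ext => u z; rewrite cocommF; apply: csumF_ext => a b.
rewrite sg2E !mulrA sg_swap1; congr (_ * _); rewrite -mulrA mulrCA mulrA.
Qed.

Lemma D_coder : is_coder dV D 1.
Proof.
split; first exact: D_hdeg.
move=> m vm p q vp vq.
rewrite coef_copS /ladd fw_cat -[fw _ (MV m) _]coef_copS (hMV.1.2 _ vm _ _ vp vq) PT_coder // !coef_cat !coef_tens_cop //.
under [X in _ = X + _]csumF_ext do rewrite coef_cat mulrDl mulrDr.
under [X in _ = _ + X]csumF_ext do rewrite coef_cat mulrDr mulrDr.
rewrite !csumFD addrACA; congr (_ + _); rewrite addrC.
Qed.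

Lemma fw_coef_PT v g : vV v -> fw vV (D v) (fun w => coef (PT w) (g : SV)) =
  CF v (fun u z => fw vV (D u) (fun e => coef (Psi e z) g) +
                   ksign K 1 (mdeg dV u) * fw vV (D z) (fun e => coef (Psi u e) g)).
Proof.
move=> vv0.
transitivity (fw (vv dV) (copS dV (D v)) (fun pq => coef (Psi pq.1 pq.2) g)).
  rewrite /copS fw_bind; apply: fw_extP => w vw; rewrite coef_PT fw_cop //.
rewrite (fw_eq _ (s' := tens dV D LID 0 (cop K dV v) ++ tens dV LID D 1 (cop K dV v))); last first.
  move=> [p q] /andP[vp vq]; exact: ((D_coder.2) _ vv0 _ _ vp vq).
rewrite fw_cat !fw_tens !fw_cop // -csumFD; apply: csumF_ext_in => a am.
case/andP: (cop_valid vv0 am) => v1 v2.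
rewrite /vv !fw_tprod ksign0 mul1r fw_lid //; congr (_ + _ * _).
by apply: fw_ext => e; rewrite fw_lid.
Qed.

Definition L1 (x : SE) (z y : SV) := coef (lapp dV MV (Phi x z)) y.
Definition L2 (x : SE) (z y : SV) := coef (lapp dV (Phi x) (MV z)) y.
Definition PP (x x' : SE) (z y : SV) := coef (lapp dV (Phi x) (Phi x' z)) y.

Lemma fw_coef_MV v y : vV v -> vV y -> fw vV (D v) (fun w => coef (MV w) y) =
  CF v (fun u z => fw vE (T u) (fun x => L1 x z y)).
Proof.
move=> vv0 vy; rewrite /ladd fw_cat -[fw _ (MV v) _]coef_lapp.
rewrite -/(lcomp dV MV MV v) (hMV.2 _ vv0 _ vy) /coef big_nil addr0 fw_PT.
by apply: csumF_ext => u z; rewrite fw_Phis; apply: fw_ext => x; rewrite /L1 coef_lapp.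
Qed.

Definition VV (u a b y : SV) := fw vE (T u) (fun x => fw vE (T a) (fun x' => PP x x' b y)).

Lemma A2 u z y : fw vV (D z) (fun e => coef (Psi u e) y) =
  fw vE (T u) (fun x => L2 x z y) + CF z (fun a b => VV u a b y).
Proof.
under fw_ext do rewrite coef_Psi.
rewrite -fw_exch addrC -fw_csumF -fw_add; apply: fw_ext => x.
rewrite /ladd fw_cat -[fw _ (MV z) _]coef_lapp -/(L2 x z y) fw_PT; congr (_ + _).
apply: csumF_ext => a b; rewrite fw_Phis; apply: fw_ext => x'.
by rewrite /PP coef_lapp.
Qed.

Lemma comorph_sum u (G : SE -> SE -> K) : vV u ->
  fw vE (T u) (fun x => csumF dE x G) =
  CF u (fun u1 u2 => fw vE (T u1) (fun x1 => fw vE (T u2) (fun x2 => G x1 x2))).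
Proof.
move=> vu.
transitivity (fw (vv dE) (copS dE (T u)) (fun pq => G pq.1 pq.2)).
  by rewrite /copS fw_bind; apply: fw_extP => x vx; rewrite fw_cop.
rewrite (fw_eq _ (s' := tens dV T T 0 (cop K dV u))); last first.
  move=> [p q] /andP[vp vq]; exact: (hO.1.2 _ vu _ _ vp vq).
rewrite fw_tens fw_cop //; apply: csumF_ext => u1 u2.
by rewrite ksign0 mul1r /vv fw_tprod.
Qed.

Lemma coef_flat_half (s : fsum K (SE * SE)) (f : SE * SE -> fsum K SV) y :
  coef (flatten [seq fscale (a.1 / 2) (f a.2) | a <- s]) y =
  \sum_(a <- s) a.1 * (2^-1 * coef (f a.2) y).
Proof.
rewrite coefE /fw big_flatten /= big_map; apply: eq_bigr => a _.
by rewrite -[LHS]/(fw (pred1 y) (fscale (a.1 / 2) (f a.2)) (fun _ => 1)) fw_fscale -coefE mulrA.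
Qed.

Definition sgz (k : int) : K := (-1) ^+ absz k.

Lemma action_coef x z y : vE x -> vV z -> vV y ->
  coef (Phis dE Phi (ME x) z) y =
  - L1 x z y + sgz (mdeg dE x + 1) * L2 x z y +
  csumF dE x (fun x1 x2 => 2^-1 * (sgz (mdeg dE x1 + 1) *
     (PP x1 x2 z y - ksign K (mdeg dE x1 + 1) (mdeg dE x2 + 1) * PP x2 x1 z y))).
Proof.
move=> vx vz vy; rewrite (hact.2 _ vx _ vz _ vy) coef_ladd /dgla_d !coef_ladd !coef_lscale.
rewrite !coef_lcomp -!coef_lapp -/(L1 x z y) -/(L2 x z y) mulN1r.
congr (_ + _); rewrite (coef_flat_half _ (fun pq : SE * SE => dgla_br dV (Phi pq.1) (Phi pq.2) (mdeg dE pq.1 + 1) (mdeg dE pq.2 + 1) z)) /csumF; apply: eq_bigr => a _; congr (_ * (_ * _)).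
rewrite /dgla_br coef_lscale coef_ladd coef_lscale !coef_lcomp -!coef_lapp.
by rewrite /sgz /PP mulNr.
Qed.

Lemma A1 u z y : vV u -> vV z -> vV y ->
 fw vV (D u) (fun e => coef (Psi e z) y) =
 fw vE (T u) (fun x => - L1 x z y + sgz (mdeg dV u + 1) * L2 x z y) +
 CF u (fun u1 u2 => 2^-1 * (sgz (mdeg dV u1 + 1) *
   (VV u1 u2 z y - ksign K (mdeg dV u1 + 1) (mdeg dV u2 + 1) * VV u2 u1 z y))).
Proof.
move=> vu vz vy.
under fw_ext do rewrite coef_Psi.
transitivity (fw vE (lapp dV T (D u)) (fun x => coef (Phi x z) y)); first by rewrite /lapp fw_bind.
rewrite (fw_eq _ (s' := lapp dE ME (T u))); last by move=> x vx; rewrite (hO.2 _ vu _ vx).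
rewrite /lapp fw_bind.
transitivity (fw vE (T u) (fun x => - L1 x z y + sgz (mdeg dV u + 1) * L2 x z y) +
  fw vE (T u) (fun x => csumF dE x (fun x1 x2 => 2^-1 * (sgz (mdeg dE x1 + 1) *
     (PP x1 x2 z y - ksign K (mdeg dE x1 + 1) (mdeg dE x2 + 1) * PP x2 x1 z y))))).
  by rewrite -fw_add; apply: fw_Tdeg => // x vx ex; rewrite -coef_Phis action_coef // ex.
rewrite comorph_sum //; congr (_ + _); apply: csumF_ext_in => a am.
case/andP: (cop_valid vu am) => v1 v2.
transitivity (fw vE (T a.2.1) (fun x1 => fw vE (T a.2.2) (fun x2 => 2^-1 * (sgz (mdeg dV a.2.1 + 1) *
   (PP x1 x2 z y - ksign K (mdeg dV a.2.1 + 1) (mdeg dV a.2.2 + 1) * PP x2 x1 z y))))).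
  by apply: fw_Tdeg => // x1 _ e1; apply: fw_Tdeg => // x2 _ e2; rewrite e1 e2.
rewrite /VV [X in _ - _ * X]fw_exch.
apply: fw_comb => x1; exact: fw_comb.
Qed.

Lemma sgz_succ a : sgz (a + 1) = - ksign K 1 a.
Proof.
rewrite /sgz sg_par ksignE parD /= addbT.
by case: (par a); rewrite /= ?expr0 ?expr1 ?opprK.
Qed.

Lemma sg_swap2 (a b : int) : ksign K a b * sgz (b + 1) * ksign K (b + 1) (a + 1) = ksign K 1 a.
Proof.
rewrite /sgz sg_par !ksignE !parD /=.
case: (par a); case: (par b); rewrite /= ?expr0 ?expr1 ?mulr1 ?mul1r ?mulrNN ?mulN1r ?mulrN1 ?opprK ?mulr1 ?mul1r //.
Qed.

Lemma key_cancel p q y : vV p ->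
  CF p (fun u1 u2 => 2^-1 * (sgz (mdeg dV u1 + 1) *
     (VV u1 u2 q y - ksign K (mdeg dV u1 + 1) (mdeg dV u2 + 1) * VV u2 u1 q y))) +
  CF p (fun u1 u2 => ksign K 1 (mdeg dV u1) * VV u1 u2 q y) = 0.
Proof.
move=> vp.
set X := CF p (fun u1 u2 => ksign K 1 (mdeg dV u1) * VV u1 u2 q y).
rewrite (@csumF_ext _ _ _ _ _ (fun u1 u2 => - (2^-1 * (ksign K 1 (mdeg dV u1) * VV u1 u2 q y)) +
   - (2^-1 * (sgz (mdeg dV u1 + 1) * ksign K (mdeg dV u1 + 1) (mdeg dV u2 + 1) * VV u2 u1 q y)))); last first.
  by move=> u1 u2; rewrite sgz_succ !mulrBr mulNr mulrN !mulrA.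
rewrite csumFD !csumFN csumFZ -/X cocommF.
rewrite (@csumF_ext _ _ _ _ _ (fun u1 u2 => 2^-1 * (ksign K 1 (mdeg dV u1) * VV u1 u2 q y))); last first.
  by move=> u1 u2; rewrite !sg2E -(sg_swap2 (mdeg dV u1) (mdeg dV u2)) mulrCA; congr (_ * _); rewrite !mulrA.
rewrite csumFZ -/X.
by rewrite -opprD !(mulrC 2^-1) -splitr addNr.
Qed.

Lemma D_sq : eqL dV dV (lcomp dV D D) (lzero K nV).
Proof.
move=> v vv0 y vy.
rewrite coef_lcomp [RHS]/coef big_nil.
under fw_ext do rewrite coef_ladd.
rewrite (fw_add _ _ (fun w => coef (PT w) y) (fun w => coef (MV w) y)).
rewrite fw_coef_PT // fw_coef_MV // -csumFD.
transitivity (CF v (fun u z => CF u (fun u1 u2 => 2^-1 * (sgz (mdeg dV u1 + 1) *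
     (VV u1 u2 z y - ksign K (mdeg dV u1 + 1) (mdeg dV u2 + 1) * VV u2 u1 z y))) +
   CF z (fun a b => ksign K 1 (mdeg dV u) * VV u a b y))).
  apply: csumF_ext_in => a am; case/andP: (cop_valid vv0 am) => v1 v2.
  rewrite A1 // A2 // csumFZ.
  rewrite (fw_add _ _ (fun x => - L1 x a.2.2 y) (fun x => sgz (mdeg dV a.2.1 + 1) * L2 x a.2.2 y)).
  rewrite fw_opp fw_scal sgz_succ; ring.
rewrite csumFD coassocF -csumFD.
rewrite (@csumF_ext_in _ _ _ _ _ (fun _ _ => 0)) ?csumF0 // => a am.
case/andP: (cop_valid vv0 am) => v1 v2.
exact: key_cancel.
Qed.
End Main.


Close Scope ring_scope.
Unset Implicit Arguments.

Theorem mainTheorem6 (K : numFieldType) (nE nV : nat)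
  (dE : 'I_nE -> int) (dV : 'I_nV -> int)
  (ME : lmap K nE nE) (MV : lmap K nV nV)
  (Phi : seq 'I_nE -> lmap K nV nV) (T : lmap K nV nE) :
  lie_inf dE ME -> lie_inf dV MV ->
  is_action dE dV ME MV Phi ->
  O_operator dE dV ME MV Phi T ->
  lie_inf dV (ladd (PhiT dE dV Phi T) MV) /\
  lie_inf_morph dV dE (ladd (PhiT dE dV Phi T) MV) ME T.
Proof.
move=> _ hMV hact hO; split.
  split; [exact: (D_coder hMV hact hO) | exact: (D_sq hMV hact hO)].
split; first exact: hO.1.
by move=> m vm p vp; rewrite (hO.2 _ vm _ vp).
Qed.
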